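(* Let $G$ be a group, let $A=\bigoplus_{g\in G}A_g$ and $B=\bigoplus_{g\in G}B_g$ be $G$-graded rings, and let $\phi\colon A\to B$ be a surjective ring homomorphism with $\phi(A_g)\subseteq B_g$ for all $g\in G$. If $A$ is epsilon-strongly $G$-graded, then $B$ is epsilon-strongly $G$-graded.
   Context: Rings are associative, not necessarily unital; $XY$ denotes finite sums of products. A $G$-grading: $S=\bigoplus_gS_g$, $S_gS_h\subseteq S_{gh}$. The grading is epsilon-strong if $S_gS_{g^{-1}}S_g=S_g$ for all $g$ and each ring $S_gS_{g^{-1}}$ has a multiplicative identity element. *)

(* Defs.v *)
From HB Require Import structures.
From mathcomp Require Import all_boot all_algebra.
From Stdlib Require Import List.
Set Implicit Arguments. Unset Strict Implicit. Unset Printing Implicit Defensive.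
Import GRing.Theory.
Local Open Scope ring_scope.

Definition is_group (G : Type) (op : G -> G -> G) (e : G) (inv : G -> G) : Prop :=
  [/\ forall a b c, op a (op b c) = op (op a b) c,
      forall a, op e a = a /\ op a e = a &
      forall a, op (inv a) a = e /\ op a (inv a) = e].

Definition is_rng (R : zmodType) (mul : R -> R -> R) : Prop :=
  [/\ forall x y z, mul x (mul y z) = mul (mul x y) z,
      forall x y z, mul (x + y) z = mul x z + mul y z &
      forall x y z, mul x (y + z) = mul x y + mul x z].

Definition is_addsubgroup (R : zmodType) (X : R -> Prop) : Prop :=
  X 0 /\ forall x y, X x -> X y -> X (x - y).

Definition is_grading (G : Type) (op : G -> G -> G) (R : zmodType)
    (mul : R -> R -> R) (S : G -> R -> Prop) : Prop :=
  [/\ forall g, is_addsubgroup (S g),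
      forall x : R, exists (s : list G) (f : G -> R),
        (forall g, S g (f g)) /\ x = \sum_(g <- s) f g,
      forall (s : list G) (f : G -> R), NoDup s -> (forall g, S g (f g)) ->
        \sum_(g <- s) f g = 0 -> forall g, In g s -> f g = 0 &
      forall g h x y, S g x -> S h y -> S (op g h) (mul x y)].

Definition setmul (R : zmodType) (mul : R -> R -> R) (X Y : R -> Prop) : R -> Prop :=
  fun z => exists s : list (R * R),
    (forall p, In p s -> X p.1 /\ Y p.2) /\ z = \sum_(p <- s) mul p.1 p.2.

Definition epsilon_strong (G : Type) (inv : G -> G) (R : zmodType)
    (mul : R -> R -> R) (S : G -> R -> Prop) : Prop :=
  forall g,
    (forall z, setmul mul (setmul mul (S g) (S (inv g))) (S g) z <-> S g z) /\
    exists e, setmul mul (S g) (S (inv g)) e /\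
      forall x, setmul mul (S g) (S (inv g)) x -> mul e x = x /\ mul x e = x.

(* Main.v *)
Require Import Defs.
From mathcomp Require Import all_boot all_algebra.
From Stdlib Require Import List ClassicalEpsilon Classical.
Local Open Scope ring_scope.
Import GRing.Theory.

Definition em_dec (P : Prop) : {P} + {~ P} := excluded_middle_informative P.

Lemma sub_add (R : zmodType) (X : R -> Prop) x y :
  is_addsubgroup X -> X x -> X y -> X (x + y).
Proof.
move=> [H0 Hs] Hx Hy.
have -> : x + y = x - (0 - y) by rewrite sub0r opprK.
by apply Hs => //; apply Hs.
Qed.

Lemma sub_sum (R : zmodType) (X : R -> Prop) (I : Type) (s : list I) (F : I -> R) :
  is_addsubgroup X -> (forall i, In i s -> X (F i)) -> X (\sum_(i <- s) F i).
Proof.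
move=> HX; elim: s => [|a s IH] H; first by rewrite big_nil; case: HX.
rewrite big_cons; apply: sub_add => //; first by apply: H; left.
by apply: IH => i Hi; apply: H; right.
Qed.

Lemma sum_eq_on (R : zmodType) (I : Type) (s : list I) (F F' : I -> R) :
  (forall i, In i s -> F i = F' i) -> \sum_(i <- s) F i = \sum_(i <- s) F' i.
Proof.
elim: s => [|a s IH] H; first by rewrite !big_nil.
rewrite !big_cons H; last by left.
by rewrite IH // => i Hi; apply: H; right.
Qed.

Lemma sum_notin (R : zmodType) (I : Type) (t : list I) x (c : R) :
  ~ In x t -> \sum_(h <- t) (if em_dec (h = x) then c else 0) = 0.
Proof.
elim: t => [|a t IH] H; first by rewrite big_nil.
rewrite big_cons IH; last by move=> Hi; apply: H; right.
destruct (em_dec (a = x)) as [E|NE]; last by rewrite addr0.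
by exfalso; apply: H; left; rewrite E.
Qed.

Lemma sum_single (R : zmodType) (I : Type) (t : list I) x (c : R) :
  NoDup t -> In x t -> \sum_(h <- t) (if em_dec (h = x) then c else 0) = c.
Proof.
elim: t => [|a t IH] ND H; first by case: H.
inversion ND; subst.
rewrite big_cons; destruct (em_dec (a = x)) as [E|NE].
  by subst; rewrite sum_notin // addr0.
rewrite add0r IH //; case: H => // E; by case: NE.
Qed.

Lemma decomp (I : Type) (R : zmodType) (S : I -> R -> Prop)
  (HS : forall g, is_addsubgroup (S g)) (s : list I) (f : I -> R) g :
  (forall h, S h (f h)) ->
  exists t k, [/\ NoDup t, In g t, (forall h, S h (k h)) &
     \sum_(h <- s) f h = \sum_(h <- t) k h].
Proof.
move=> Hf; elim: s => [|x s [t [k [ND Ig Hk E]]]].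
  exists (g :: nil), (fun _ => 0); split.
  - by constructor; [case| constructor].
  - by left.
  - by move=> h; case: (HS h).
  - by rewrite big_nil big_cons big_nil addr0.
case: (classic (In x t)) => Hx.
  exists t, (fun h => k h + (if em_dec (h = x) then f x else 0)); split => //.
    move=> h; apply: sub_add => //; destruct (em_dec (h = x)) as [->|NE] => //; by case: (HS h).
  by rewrite big_cons big_split /= sum_single // E addrC.
exists (x :: t), (fun h => if em_dec (h = x) then f x else k h); split.
- by constructor.
- by right.
- by move=> h; destruct (em_dec (h = x)) as [->|NE].
rewrite !big_cons E; destruct (em_dec (x = x)) as [Exx|] => //; congr (_ + _).
apply: sum_eq_on => i Hi; destruct (em_dec (i = x)) as [E'|] => //; subst; by case: Hx.
Qed.

Lemma setmul_nil (R : zmodType) (mul : R -> R -> R) X Y : setmul mul X Y 0.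
Proof. by exists nil; split => //; rewrite big_nil. Qed.

Lemma setmul_cons (R : zmodType) (mul : R -> R -> R) (X Y : R -> Prop) x y a :
  X x -> Y y -> setmul mul X Y a -> setmul mul X Y (mul x y + a).
Proof.
move=> Hx Hy [s [Hs ->]]; exists ((x, y) :: s); split; last by rewrite big_cons.
by move=> p [<-|Hp] //; apply: Hs.
Qed.

Lemma setmul_in (G : Type) (op : G -> G -> G) (R : zmodType) (mul : R -> R -> R)
  (S : G -> R -> Prop) (HS : forall g, is_addsubgroup (S g))
  (Hm : forall g h x y, S g x -> S h y -> S (op g h) (mul x y))
  (X Y : R -> Prop) a b z :
  (forall x, X x -> S a x) -> (forall y, Y y -> S b y) ->
  setmul mul X Y z -> S (op a b) z.
Proof.
move=> HX HY [s [Hs ->]]; apply: sub_sum => // p Hp.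
by case: (Hs p Hp) => H1 H2; apply: Hm; [apply: HX | apply: HY].
Qed.

Theorem lemma3p10
  (G : Type) (gop : G -> G -> G) (ge : G) (ginv : G -> G)
  (HG : is_group gop ge ginv)
  (A B : zmodType) (mulA : A -> A -> A) (mulB : B -> B -> B)
  (HA : is_rng mulA) (HB : is_rng mulB)
  (SA : G -> A -> Prop) (SB : G -> B -> Prop)
  (HSA : is_grading gop mulA SA) (HSB : is_grading gop mulB SB)
  (phi : A -> B)
  (phi_add : forall x y, phi (x + y) = phi x + phi y)
  (phi_mul : forall x y, phi (mulA x y) = mulB (phi x) (phi y))
  (phi_surj : forall b, exists a, phi a = b)
  (phi_deg : forall g a, SA g a -> SB g (phi a)) :
  epsilon_strong ginv mulA SA -> epsilon_strong ginv mulB SB.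
Proof.
have phi0 : phi 0 = 0.
  by apply: (@addrI _ (phi 0)); rewrite -phi_add !addr0.
have phiN : forall x, phi (- x) = - phi x.
  move=> x; apply: (@addrI _ (phi x)); by rewrite -phi_add !subrr.
have phiB : forall x y, phi (x - y) = phi x - phi y.
  by move=> x y; rewrite phi_add phiN.
have phi_sum : forall (I : Type) (s : list I) F,
    phi (\sum_(i <- s) F i) = \sum_(i <- s) phi (F i).
  move=> I; elim=> [|a s IH] F; first by rewrite !big_nil.
  by rewrite !big_cons phi_add IH.
case: HSA => HAsub HAdec HAdir HAm.
case: HSB => HBsub HBdec HBdir HBm.
have lift : forall g b, SB g b -> exists a, SA g a /\ phi a = b.
  move=> g b Hb; case: (phi_surj b) => a Ea.
  case: (HAdec a) => s [f [Hf Ef]].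
  case: (@decomp _ _ _ HAsub s f g Hf) => t [k [ND Ig Hk Ek]].
  exists (k g); split => //.
  pose d := fun h => phi (k h) - (if em_dec (h = g) then b else 0).
  have Hd : forall h, SB h (d h).
    move=> h; rewrite /d; case: (HBsub h) => H0 HBB; apply: HBB; first exact: phi_deg.
    by destruct (em_dec (h = g)) as [->|].
  have Sd : \sum_(h <- t) d h = 0.
    rewrite /d sumrB sum_single // -phi_sum -Ek -Ef Ea subrr //.
  have := HBdir t d ND Hd Sd g Ig; rewrite /d; destruct (em_dec (g = g)) as [Egg|] => //.
  by move/eqP; rewrite subr_eq0 => /eqP.
have setmul_phi : forall (X : A -> Prop) (Y : A -> Prop) (X' Y' : B -> Prop) a,
    (forall x, X x -> X' (phi x)) -> (forall y, Y y -> Y' (phi y)) ->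
    setmul mulA X Y a -> setmul mulB X' Y' (phi a).
  move=> X Y X' Y' a HX HY [s [Hs ->]].
  exists (map (fun p => (phi p.1, phi p.2)) s); split.
    move=> p /in_map_iff [q [<- Hq]] /=; case: (Hs q Hq) => ? ?; split; auto.
  by rewrite big_map phi_sum; apply: eq_bigr => p _; rewrite phi_mul.
have setmul_lift : forall g h y, setmul mulB (SB g) (SB h) y ->
    exists x, setmul mulA (SA g) (SA h) x /\ phi x = y.
  move=> g h y [s [Hs ->]]; elim: s Hs => [|p s IH] Hs.
    by exists 0; split; [apply: setmul_nil | rewrite phi0 big_nil].
  case: IH => [q Hq|x [Hx Ex]]; first by apply: Hs; right.
  case: (Hs p (or_introl erefl)) => H1 H2.
  case: (lift _ _ H1) => u [Hu Eu]; case: (lift _ _ H2) => v [Hv Ev].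
  exists (mulA u v + x); split; first by apply: setmul_cons.
  by rewrite phi_add phi_mul Eu Ev Ex big_cons.
case: HG => Gass Gid Ginv.
move=> HeA g; case: (HeA g) => [HA1 [eA [HeA1 HeA2]]]; split.
  move=> z; split.
    move=> Hz.
    have Egg : gop (gop g (ginv g)) g = g.
      by rewrite -Gass (proj1 (Ginv g)) (proj2 (Gid g)).
    rewrite -Egg; apply: (@setmul_in _ _ _ _ _ HBsub HBm _ _ _ _ _ _ _ Hz) => //.
    by move=> x Hx; apply: (@setmul_in _ _ _ _ _ HBsub HBm _ _ _ _ _ _ _ Hx).
  move=> Hz; case: (lift _ _ Hz) => a [Ha <-].
  apply: (setmul_phi _ _ _ _ _ _ _ (proj2 (HA1 a) Ha)) => [x Hx|y Hy].
    by apply: (setmul_phi _ _ _ _ _ _ _ Hx) => ? ?; apply: phi_deg.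
  by apply: phi_deg.
exists (phi eA); split.
  by apply: (setmul_phi _ _ _ _ _ _ _ HeA1) => ? ?; apply: phi_deg.
move=> y Hy; case: (setmul_lift _ _ _ Hy) => x [Hx <-].
case: (HeA2 x Hx) => E1 E2.
by rewrite -!phi_mul E1 E2.
Qed.
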